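(* There is an absolute constant $\epsilon_0>0$ such that the following holds. Let $n\ge 2$, $\mathcal F\subseteq S_n$, $f=2\chi_{\mathcal F}-1$, $f_1$ its projection onto $U_1$, $\epsilon=\mathbb E[(f-f_1)^2]$ with $0<\epsilon<\epsilon_0$, and let $(X,Y)$ be a typical restriction. Choose $\alpha,\beta$ independently and uniformly from $T_{X,Y}$, and write $\alpha_1,\beta_1$ for their restrictions to $X$ and $\alpha_2,\beta_2$ for their restrictions to $[n]\setminus X$. Then with probability at least $1-8\epsilon^{2/7}$ one of the following holds: (a) $|g_1(\alpha_1)-g_1(\beta_1)|\le 2\epsilon^{1/7}$ and $|g_2(\alpha_2)-g_2(\beta_2)|\le2\epsilon^{1/7}$; (b) $|g_1(\alpha_1)-g_1(\beta_1)|\le 2\epsilon^{1/7}$ and $|g_2(\alpha_2)-g_2(\beta_2)|\in[2-2\epsilon^{1/7},2+2\epsilon^{1/7}]$; (c) $|g_1(\alpha_1)-g_1(\beta_1)|\in[2-2\epsilon^{1/7},2+2\epsilon^{1/7}]$ and $|g_2(\alpha_2)-g_2(\beta_2)|\le2\epsilon^{1/7}$.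
   Context: $S_n$ is the symmetric group on $[n]$; $T_{ij}$ is the indicator of $\{\pi:\pi(i)=j\}$; $U_1=\mathrm{span}\{T_{ij}\}$ with inner product $\langle f,g\rangle=\frac1{n!}\sum_\pi f(\pi)g(\pi)$. With $|\mathcal F|=c\,n!$, let $a_{ij}=(n-1)\langle f,T_{ij}\rangle-\frac{n-2}{n}(2c-1)$. A restriction is $(X,Y)$ with $X,Y\subseteq[n]$, $|X|=|Y|$; $T_{X,Y}=\{\pi:\pi(X)=Y\}$ with uniform measure. For $\pi\in T_{X,Y}$, $g_1(\pi)=\sum_{i\in X}a_{i\pi(i)}$ (depending only on $\pi|_X$), $g_2(\pi)=\sum_{i\notin X}a_{i\pi(i)}$ (depending only on $\pi|_{[n]\setminus X}$), $g=g_1+g_2$. A function $\phi$ is $(\delta,\epsilon)$-almost Boolean if $\Pr[||\phi|-1|\le\epsilon]\ge1-\delta$. A restriction is typical if: (a) $g$ is $(\epsilon^{4/7},\epsilon^{1/7})$-almost Boolean on $T_{X,Y}$; (b) $\mathbb E[g_1],\mathbb E[g_2]$ are within $\epsilon^{1/7}$ of $c-\frac12$; (c) $\mathbb E[(|g|-1)^2]\le\epsilon^{6/7}$. *)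

(* Defs.v *)
From Stdlib Require Import Reals ClassicalEpsilon.
From HB Require Import structures.
From mathcomp Require Import all_boot all_fingroup.

Set Implicit Arguments.
Unset Strict Implicit.
Unset Printing Implicit Defensive.

Local Open Scope R_scope.

Definition rsum (T : finType) (A : {pred T}) (F : T -> R) : R :=
  \big[Rplus/0]_(x in A) F x.

Definition ind (P : Prop) : R :=
  if excluded_middle_informative P then 1 else 0.

Definition Eu (T : finType) (A : {set T}) (phi : T -> R) : R :=
  / INR #|A| * rsum (mem A) phi.
Definition Pru (T : finType) (A : {set T}) (P : T -> Prop) : R :=
  Eu A (fun x => ind (P x)).

Definition Tij (n : nat) (i j : 'I_n) (p : {perm 'I_n}) : R :=
  if p i == j then 1 else 0.

Definition ip (n : nat) (f g : {perm 'I_n} -> R) : R :=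
  / INR (n`!) * rsum (mem [set: {perm 'I_n}]) (fun p => f p * g p).

Definition inU1 (n : nat) (h : {perm 'I_n} -> R) : Prop :=
  exists a : 'I_n -> 'I_n -> R, forall p,
    h p = rsum (mem [set: 'I_n]) (fun i => rsum (mem [set: 'I_n]) (fun j => a i j * Tij i j p)).

Definition is_proj_U1 (n : nat) (f f1 : {perm 'I_n} -> R) : Prop :=
  inU1 f1 /\ forall i j : 'I_n, ip (fun p => f p - f1 p) (Tij i j) = 0.

Definition fF (n : nat) (F : {set {perm 'I_n}}) (p : {perm 'I_n}) : R :=
  2 * (if p \in F then 1 else 0) - 1.

Definition cF (n : nat) (F : {set {perm 'I_n}}) : R := INR #|F| / INR (n`!).

Definition acoef (n : nat) (F : {set {perm 'I_n}}) (i j : 'I_n) : R :=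
  (INR n - 1) * ip (fF F) (Tij i j) - (INR n - 2) / INR n * (2 * cF F - 1).

Definition TXY (n : nat) (X Y : {set 'I_n}) : {set {perm 'I_n}} :=
  [set p : {perm 'I_n} | [set p x | x in X] == Y].

Definition g1 (n : nat) (F : {set {perm 'I_n}}) (X : {set 'I_n}) (p : {perm 'I_n}) : R :=
  rsum (mem X) (fun i => acoef F i (p i)).
Definition g2 (n : nat) (F : {set {perm 'I_n}}) (X : {set 'I_n}) (p : {perm 'I_n}) : R :=
  rsum (mem (~: X)) (fun i => acoef F i (p i)).
Definition gfun (n : nat) (F : {set {perm 'I_n}}) (X : {set 'I_n}) (p : {perm 'I_n}) : R :=
  g1 F X p + g2 F X p.

Definition almost_boolean (T : finType) (A : {set T}) (phi : T -> R) (delta e : R) : Prop :=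
  Pru A (fun x => Rabs (Rabs (phi x) - 1) <= e) >= 1 - delta.

Definition typical (n : nat) (F : {set {perm 'I_n}}) (X Y : {set 'I_n}) (eps : R) : Prop :=
  let T := TXY X Y in
  almost_boolean T (gfun F X) (Rpower eps (4/7)) (Rpower eps (1/7)) /\
  Rabs (Eu T (g1 F X) - (cF F - 1/2)) <= Rpower eps (1/7) /\
  Rabs (Eu T (g2 F X) - (cF F - 1/2)) <= Rpower eps (1/7) /\
  Eu T (fun p => (Rabs (gfun F X p) - 1) ^ 2) <= Rpower eps (6/7).

(* Main.v *)
Require Import Defs.
From Stdlib Require Import Reals.
From HB Require Import structures.
From mathcomp Require Import all_boot all_fingroup.
From Stdlib Require Import Lra Classical ClassicalEpsilon.

Local Open Scope R_scope.

HB.instance Definition _ := Monoid.isComLaw.Build R R0 Rplus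
  (fun x y z => esym (Rplus_assoc x y z)) Rplus_comm Rplus_0_l.

Lemma key (t A1 A2 B1 B2 : R) : 0 < t < 1/2 ->
 Rabs (Rabs (A1+A2) - 1) <= t -> Rabs (Rabs (B1+B2) - 1) <= t ->
 Rabs (Rabs (A1+B2) - 1) <= t -> Rabs (Rabs (B1+A2) - 1) <= t ->
 (Rabs (A1 - B1) <= 2*t /\ Rabs (A2 - B2) <= 2*t) \/
 (Rabs (A1 - B1) <= 2*t /\ 2-2*t <= Rabs (A2 - B2) <= 2+2*t) \/
 (2-2*t <= Rabs (A1 - B1) <= 2+2*t /\ Rabs (A2 - B2) <= 2*t).
Proof.
intros. revert H0 H1 H2 H3. unfold Rabs. repeat destruct Rcase_abs; intros; lra.
Qed.

Lemma rsum_const (T : finType) (A : {set T}) c :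
  rsum (mem A) (fun _ => c) = INR #|A| * c.
Proof.
rewrite /rsum big_const. elim: #|A| => [|k IH]; first (simpl; lra).
rewrite iterS IH S_INR; lra.
Qed.

Lemma rsum_scal (T : finType) (A : {pred T}) c F :
  rsum A (fun x => c * F x) = c * rsum A F.
Proof.
rewrite /rsum. elim/big_rec2: _ => [|i y1 y2 _ ->]; lra.
Qed.

Lemma rsum_le (T : finType) (A : {pred T}) F G :
  (forall x, x \in A -> F x <= G x) -> rsum A F <= rsum A G.
Proof.
move=> H. rewrite /rsum. elim/big_rec2: _ => [|i y1 y2 Hi IH]; first lra.
have := H i Hi. lra.
Qed.

Lemma rsum_add5 (T : finType) (A : {set T}) F1 F2 F3 F4 c :
  rsum (mem A) (fun x => F1 x + F2 x + F3 x + F4 x + c) =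
  rsum (mem A) F1 + rsum (mem A) F2 + rsum (mem A) F3 + rsum (mem A) F4
  + INR #|A| * c.
Proof.
by rewrite -rsum_const /rsum !big_split.
Qed.

Lemma rsum_setX (T : finType) (A B : {set T}) F :
  rsum (mem (setX A B)) F = rsum (mem A) (fun a => rsum (mem B) (fun b => F (a, b))).
Proof.
rewrite /rsum pair_big /=. apply: eq_big => [[a b]|[a b] _] //=.
by rewrite in_setX.
Qed.

Lemma ind_bounds P : 0 <= Defs.ind P <= 1.
Proof. unfold Defs.ind; destruct excluded_middle_informative; simpl; lra. Qed.

Section Mix.
Variables (n : nat) (X Y : {set 'I_n}).
Local Notation T := (TXY X Y).

Definition mixf (a b : {perm 'I_n}) (i : 'I_n) : 'I_n := if i \in X then a i else b i.
Definition mixp a b : {perm 'I_n} :=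
  odflt 1%g [pick p : {perm 'I_n} | [forall i, p i == mixf a b i]].

Lemma mixf_inj a b : a \in T -> b \in T -> injective (mixf a b).
Proof.
rewrite !inE => /eqP Ha /eqP Hb i j. rewrite /mixf.
case: (boolP (i \in X)) => iX; case: (boolP (j \in X)) => jX.
- by apply: perm_inj.
- move=> E. have : b j \in Y by rewrite -E -Ha; apply: imset_f.
  rewrite -Hb => /imsetP [x xX /perm_inj ejx]. by rewrite ejx xX in jX.
- move=> E. have : b i \in Y by rewrite E -Ha; apply: imset_f.
  rewrite -Hb => /imsetP [x xX /perm_inj ejx]. by rewrite ejx xX in iX.
- by apply: perm_inj.
Qed.

Lemma mixpE a b : a \in T -> b \in T -> forall i, mixp a b i = mixf a b i.
Proof.
move=> Ha Hb. rewrite /mixp; case: pickP => [p /forallP H|H] /=.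
  by move=> i; apply/eqP.
move: (H (perm (mixf_inj _ _ Ha Hb))).
suff -> : [forall i, perm (mixf_inj _ _ Ha Hb) i == mixf a b i] by [].
by apply/forallP => i; rewrite permE.
Qed.

Lemma mixp_in a b : a \in T -> b \in T -> mixp a b \in T.
Proof.
move=> Ha Hb. move: (Ha); rewrite !inE => /eqP <-. apply/eqP.
apply: eq_in_imset => x xX. by rewrite mixpE // /mixf xX.
Qed.

Definition sig (x : {perm 'I_n} * {perm 'I_n}) :=
  if x \in setX T T then (mixp x.1 x.2, mixp x.2 x.1) else x.

Lemma sig_in x : (sig x \in setX T T) = (x \in setX T T).
Proof.
case: x => a b. rewrite /sig; case: ifP => // /setXP [H1 H2].
by rewrite in_setX !mixp_in.
Qed.

Lemma sigK : involutive sig.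
Proof.
move=> [a b]. case: (boolP ((a, b) \in setX T T)) => H; last first.
  by rewrite /sig (negbTE H) (negbTE H).
have E : sig (a, b) = (mixp a b, mixp b a) by rewrite /sig H.
move: (H) => /setXP [Ha Hb].
rewrite E /sig in_setX !mixp_in //=.
congr pair; apply/permP => i; rewrite mixpE ?mixp_in // /mixf;
  case: ifP => iX; rewrite mixpE // /mixf iX //.
Qed.

Lemma g1mix (F : {set {perm 'I_n}}) a b : a \in T -> b \in T ->
  g1 F X (mixp a b) = g1 F X a.
Proof.
move=> Ha Hb. rewrite /g1 /rsum. apply: eq_bigr => i iX.
by rewrite mixpE // /mixf iX.
Qed.

Lemma g2mix (F : {set {perm 'I_n}}) a b : a \in T -> b \in T ->
  g2 F X (mixp a b) = g2 F X b.
Proof.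
move=> Ha Hb. rewrite /g2 /rsum. apply: eq_bigr => i.
rewrite inE => iX. by rewrite mixpE // /mixf (negbTE iX).
Qed.

Lemma rsum_sig F :
  rsum (mem (setX T T)) (fun x => F (sig x)) = rsum (mem (setX T T)) F.
Proof.
rewrite /rsum [RHS](reindex_inj (inv_inj sigK)). apply: eq_bigl => x.
by rewrite /= sig_in.
Qed.

End Mix.

Theorem lemma2p6 :
  exists eps0 : R, 0 < eps0 /\
  forall (n : nat) (F : {set {perm 'I_n}}) (f1 : {perm 'I_n} -> R)
         (X Y : {set 'I_n}),
    (2 <= n)%N ->
    is_proj_U1 (fF F) f1 ->
    let eps := ip (fun p => fF F p - f1 p) (fun p => fF F p - f1 p) in
    0 < eps < eps0 ->
    #|X| = #|Y| ->
    typical F X Y eps ->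
    let t := Rpower eps (1/7) in
    Pru (setX (TXY X Y) (TXY X Y))
       (fun ab : {perm 'I_n} * {perm 'I_n} =>
          let d1 := Rabs (g1 F X ab.1 - g1 F X ab.2) in
          let d2 := Rabs (g2 F X ab.1 - g2 F X ab.2) in
          (d1 <= 2 * t /\ d2 <= 2 * t) \/
          (d1 <= 2 * t /\ 2 - 2 * t <= d2 <= 2 + 2 * t) \/
          (2 - 2 * t <= d1 <= 2 + 2 * t /\ d2 <= 2 * t))
     >= 1 - 8 * Rpower eps (2/7).
Proof.
exists (/128). split; [lra|].
intros n F f1 X Y Hn Hproj eps [Heps0 Heps1] HXY [HB _] t.
have tpos : 0 < t by rewrite /t /Rpower; apply: exp_pos.
have t7 : t ^ 7 = eps.
  rewrite -(Rpower_pow 7 t tpos) /t Rpower_mult.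
  replace (1/7 * INR 7) with 1 by (simpl; field). by rewrite Rpower_1.
have thalf : t < 1/2.
  destruct (Rlt_or_le t (1/2)) as [h|h]; first done.
  have := pow_incr (1/2) t 7 (conj (ltac:(lra) : 0 <= 1/2) h). simpl. lra.
have e4 : Rpower eps (4/7) = t ^ 4.
  rewrite -(Rpower_pow 4 t tpos) /t Rpower_mult. f_equal. simpl; field.
have e2 : Rpower eps (2/7) = t ^ 2.
  rewrite -(Rpower_pow 2 t tpos) /t Rpower_mult. f_equal. simpl; field.
rewrite e2. move: HB. rewrite /almost_boolean -/t e4 /Pru /Eu.
set TT := TXY X Y.
set Bp := fun x => Rabs (Rabs (gfun F X x) - 1) <= t.
set s := rsum (mem TT) (fun x => Defs.ind (Bp x)).
move=> HB.
have u0 : 0 < t * t < 1/4 by split; nra.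
have t4 : t ^ 4 <= t ^ 2 /\ t ^ 4 < 1.
  replace (t ^ 4) with ((t * t) * (t * t)) by ring.
  replace (t ^ 2) with (t * t) by ring. split; nra.
have s0 : 0 <= s <= INR #|TT|.
  split.
  - rewrite -(Rmult_0_r (INR #|TT|)) -rsum_const. apply: rsum_le => x _.
    apply ind_bounds.
  - rewrite -(Rmult_1_r (INR #|TT|)) -rsum_const. apply: rsum_le => x _.
    apply ind_bounds.
set N := INR #|TT| in s0 HB *.
have Npos : 0 < N.
  have : 0 <= N by apply pos_INR.
  case/Rle_lt_or_eq_dec => // h. rewrite -h in s0.
  have s_0 : s = 0 by lra. rewrite s_0 Rmult_0_r in HB. lra.
rewrite cardsX mult_INR -/N.
set G := fun ab : {perm 'I_n} * {perm 'I_n} => _.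
set L := fun x : {perm 'I_n} * {perm 'I_n} =>
  Defs.ind (Bp x.1) + Defs.ind (Bp x.2) + Defs.ind (Bp (sig _ X Y x).1) + Defs.ind (Bp (sig _ X Y x).2) + -3.
have HL : rsum (mem (setX TT TT)) L <= rsum (mem (setX TT TT)) G.
  apply: rsum_le => [[a b]] /setXP [Ha Hb].
  rewrite /L /sig in_setX Ha Hb /= /Bp /gfun (g1mix _ _ Y F _ _ Ha Hb) (g1mix _ _ Y F _ _ Hb Ha) (g2mix _ _ Y F _ _ Ha Hb) (g2mix _ _ Y F _ _ Hb Ha).

  rewrite /G /=. unfold Defs.ind. repeat destruct excluded_middle_informative; simpl; try lra.
  exfalso. apply n0. eapply key; [split; assumption|assumption..].
have S1 : rsum (mem (setX TT TT)) (fun x => Defs.ind (Bp x.1)) = N * s.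
  rewrite rsum_setX /=. rewrite -rsum_scal. rewrite /rsum. apply: eq_bigr => a _.
  by rewrite -/(rsum _ _) rsum_const Rmult_comm.
have S2 : rsum (mem (setX TT TT)) (fun x => Defs.ind (Bp x.2)) = N * s.
  rewrite rsum_setX /=. by rewrite rsum_const.
have S3 : rsum (mem (setX TT TT)) (fun x => Defs.ind (Bp (sig _ X Y x).1)) = N * s.
  by rewrite (rsum_sig _ X Y (fun x => Defs.ind (Bp x.1))).
have S4 : rsum (mem (setX TT TT)) (fun x => Defs.ind (Bp (sig _ X Y x).2)) = N * s.
  by rewrite (rsum_sig _ X Y (fun x => Defs.ind (Bp x.2))).
have EL : rsum (mem (setX TT TT)) L = N * N * (4 * (/ N * s) - 3).
  rewrite /L rsum_add5 S1 S2 S3 S4 cardsX mult_INR -/N. field. lra.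
have hinv : 0 < / (N * N) by apply Rinv_0_lt_compat; nra.
have := Rmult_le_compat_l _ _ _ (Rlt_le _ _ hinv) HL.
rewrite EL. replace (/ (N * N) * (N * N * (4 * (/ N * s) - 3)))
  with (4 * (/ N * s) - 3) by (field; lra).
lra.
Qed.
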